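(* Let $G_1$ and $G_2$ be graphs with a common vertex set $V$ (of size $n$), let $\{V_1,\dots,V_m\}$ be a partition of $V$, and suppose there is a unital $C^*$-algebra $\mathcal{A}$ and a quantum permutation matrix $u\in M_n(\mathcal{A})$ with $uA_{G_1}=A_{G_2}u$ that is block diagonal with respect to $\{V_1,\dots,V_m\}$, i.e. $u_{ab}=0$ whenever $a$ and $b$ lie in different parts. Let $\{S_1,\dots,S_{k+1}\}$ be a partition of $\{1,\dots,m\}$ and define the partition $\pi=\{C_1,\dots,C_k,D\}$ of $V$ by $C_i:=\bigcup_{s\in S_i}V_s$ ($1\le i\le k$) and $D:=\bigcup_{s\in S_{k+1}}V_s$. If both $G_1$ and $G_2$ satisfy the Godsil–McKay conditions (i) and (ii) with respect to $\pi$, then the switched graphs $G_1^{\pi,D}$ and $G_2^{\pi,D}$ are quantum isomorphic.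
   Context: A quantum permutation matrix over a unital $C^*$-algebra $\mathcal{A}$ is $u=(u_{ij})\in M_n(\mathcal{A})$ with $u_{ij}=u_{ij}^*=u_{ij}^2$ and $\sum_ku_{ik}=1=\sum_ku_{ki}$ for all $i$. Graphs $G_1,G_2$ on $n$ vertices are quantum isomorphic if there is a unital $C^*$-algebra $\mathcal{A}$ and a quantum permutation matrix $u\in M_n(\mathcal{A})$ with $A_{G_1}u=uA_{G_2}$, where $A_G$ is the adjacency matrix. Godsil–McKay switching: given a graph $G$ and a partition $\pi=\{C_1,\dots,C_k,D\}$ of $V(G)$ with $n_i=|C_i|$, the conditions are (i) for all $1\le i,j\le k$, any two vertices in $C_i$ have the same number of neighbours in $C_j$; (ii) each $v\in D$ has either $0$, $n_i/2$ or $n_i$ neighbours in $C_i$, for each $i$. The graph $G^{\pi,D}$ is obtained by, for each $v\in D$ and each $i$ such that $v$ has exactly $n_i/2$ neighbours in $C_i$, deleting these $n_i/2$ edges and joining $v$ instead to the other $n_i/2$ vertices of $C_i$. *)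

(* Defs.v *)
From HB Require Import structures.
From mathcomp Require Import all_boot all_order all_algebra.
From mathcomp Require Import Rstruct complex.
Set Implicit Arguments. Unset Strict Implicit. Unset Printing Implicit Defensive.
Import Order.TTheory GRing.Theory Num.Theory.
Local Open Scope ring_scope.

Notation RR := Rdefinitions.R.
Notation CC := (complex RR).

Record is_unital_cstar (A : algType CC) (nrm : A -> RR) (st : A -> A) : Prop := {
  cs_nrm_eq0    : forall a : A, nrm a = 0 <-> a = 0;
  cs_nrm_triangle : forall a b : A, nrm (a + b) <= nrm a + nrm b;
  cs_nrm_scale  : forall (c : CC) (a : A), nrm (c *: a) = Normc.normc c * nrm a;
  cs_nrm_submul : forall a b : A, nrm (a * b) <= nrm a * nrm b;
  cs_complete   : forall x : nat -> A,
      (forall eps : RR, 0 < eps -> exists N : nat, forall p q : nat,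
          (N <= p)%N -> (N <= q)%N -> nrm (x p - x q) < eps) ->
      exists l : A, forall eps : RR, 0 < eps -> exists N : nat, forall p : nat,
          (N <= p)%N -> nrm (x p - l) < eps;
  cs_st_add     : forall a b : A, st (a + b) = st a + st b;
  cs_st_scale   : forall (c : CC) (a : A), st (c *: a) = (c^*)%C *: st a;
  cs_st_mul     : forall a b : A, st (a * b) = st b * st a;
  cs_st_invol   : forall a : A, st (st a) = a;
  cs_cstar_id   : forall a : A, nrm (st a * a) = nrm a ^+ 2
}.

Definition quantum_perm_matrix (A : algType CC) (st : A -> A) (n : nat)
    (u : 'M[A]_n) : Prop :=
  (forall i j, st (u i j) = u i j /\ u i j * u i j = u i j) /\
  (forall i, \sum_(k < n) u i k = 1) /\
  (forall i, \sum_(k < n) u k i = 1).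

Definition simple_graph (n : nat) (e : rel 'I_n) : Prop :=
  symmetric e /\ irreflexive e.

Definition adjmx (R : pzRingType) (n : nat) (e : rel 'I_n) : 'M[R]_n :=
  \matrix_(i, j) (e i j)%:R.

Definition quantum_isomorphic (n : nat) (e1 e2 : rel 'I_n) : Prop :=
  exists (A : algType CC) (nrm : A -> RR) (st : A -> A),
    is_unital_cstar nrm st /\
    exists u : 'M[A]_n, quantum_perm_matrix st u /\
      adjmx A e1 *m u = u *m adjmx A e2.

Definition block_diagonal (A : algType CC) (n : nat) (P : {set {set 'I_n}})
    (u : 'M[A]_n) : Prop :=
  forall a b : 'I_n, pblock P a != pblock P b -> u a b = 0.

(* Cs = {C_1,...,C_k}, D : the remaining cell.  Number of neighbours of v in C. *)
Definition nbrs_in (n : nat) (e : rel 'I_n) (v : 'I_n) (C : {set 'I_n}) : nat :=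
  #|[set z in C | e v z]|.

Definition GM_cond_i (n : nat) (e : rel 'I_n) (Cs : {set {set 'I_n}}) : Prop :=
  forall Ci Cj, Ci \in Cs -> Cj \in Cs ->
    forall x y, x \in Ci -> y \in Ci -> nbrs_in e x Cj = nbrs_in e y Cj.

(* "0, n_i/2 or n_i neighbours"; n_i/2 is read as the rational n_i/2,
   i.e. the count c satisfies 2c = n_i. *)
Definition GM_cond_ii (n : nat) (e : rel 'I_n) (Cs : {set {set 'I_n}})
    (D : {set 'I_n}) : Prop :=
  forall v, v \in D -> forall C, C \in Cs ->
    nbrs_in e v C = 0%N \/ (nbrs_in e v C).*2 = #|C| \/ nbrs_in e v C = #|C|.

Definition switch_pair (n : nat) (e : rel 'I_n) (Cs : {set {set 'I_n}})
    (D : {set 'I_n}) (x y : 'I_n) : bool :=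
  (x \in D) && [exists C in Cs, (y \in C) && ((nbrs_in e x C).*2 == #|C|)].

(* G^{pi,D}: for such pairs the adjacency is complemented (the n_i/2 edges
   from v into C_i are deleted and v is joined to the other n_i/2 vertices). *)
Definition GM_switch (n : nat) (e : rel 'I_n) (Cs : {set {set 'I_n}})
    (D : {set 'I_n}) : rel 'I_n :=
  fun x y => if switch_pair e Cs D x y || switch_pair e Cs D y x
             then ~~ e x y else e x y.

(* Main.v *)
Require Import Defs.
From HB Require Import structures.
From mathcomp Require Import all_boot all_order all_algebra ring zify.
From mathcomp Require Import Rstruct complex.
Import Order.TTheory GRing.Theory Num.Theory.
Set Implicit Arguments. Unset Strict Implicit. Unset Printing Implicit Defensive.
Local Open Scope ring_scope.

Section Part.
Variables (n : nat) (P : {set {set 'I_n}}) (Q : {set {set {set 'I_n}}}).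
Hypothesis HP : partition P [set: 'I_n].
Hypothesis HQ : partition Q P.

Definition lab2 (x : 'I_n) := pblock Q (pblock P x).

Lemma lab2_in x : lab2 x \in Q.
Proof.
case/and3P: HP => /eqP covP tiP _; case/and3P: HQ => /eqP covQ tiQ _.
rewrite /lab2 pblock_mem // covQ pblock_mem // covP inE //.
Qed.

Lemma mem_coverQ S x : S \in Q -> (x \in cover S) = (lab2 x == S).
Proof.
case/and3P: HP => /eqP covP tiP _; case/and3P: HQ => /eqP covQ tiQ _.
move=> SQ; apply/idP/idP.
- case/bigcupP=> B BS xB.
  have BP : B \in P by rewrite -covQ; apply/bigcupP; exists S.
  rewrite /lab2 (def_pblock tiP BP xB); apply/eqP; exact: def_pblock.
- move/eqP=> <-; apply/bigcupP; exists (pblock P x).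
  + rewrite mem_pblock covQ pblock_mem // covP inE //.
  + by rewrite mem_pblock covP inE.
Qed.

End Part.

Section Mx.
Variables (A : pzRingType) (n : nat) (T : eqType) (lab : 'I_n -> T) (v : 'M[A]_n).
Hypothesis Hv : forall a b, lab a != lab b -> v a b = 0.
Hypothesis Hrow : forall i, \sum_(k < n) v i k = 1.
Hypothesis Hcol : forall i, \sum_(k < n) v k i = 1.

Lemma sum_col_g (T' : eqType) (g : 'I_n -> T') (Hg : forall a b, lab a = lab b -> g a = g b) L b :
  \sum_(k | g k == L) v k b = (g b == L)%:R.
Proof.
have [gbL|gbL] := eqVneq (g b) L.
- rewrite -(Hcol b) big_mkcond /=; apply: eq_bigr => k _.
  case: eqP => // gkL; rewrite Hv //; apply/eqP => lk.
  by apply: gkL; rewrite (Hg _ _ lk).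
- rewrite big1 // => k /eqP gkL; rewrite Hv //; apply/eqP => lk.
  by move: gbL; rewrite -(Hg _ _ lk) gkL eqxx.
Qed.

Lemma sum_row_g (T' : eqType) (g : 'I_n -> T') (Hg : forall a b, lab a = lab b -> g a = g b) L a :
  \sum_(k | g k == L) v a k = (g a == L)%:R.
Proof.
have [gaL|gaL] := eqVneq (g a) L.
- rewrite -(Hrow a) big_mkcond /=; apply: eq_bigr => k _.
  case: eqP => // gkL; rewrite Hv //; apply/eqP => lk.
  by apply: gkL; rewrite -(Hg _ _ lk).
- rewrite big1 // => k /eqP gkL; rewrite Hv //; apply/eqP => lk.
  by move: gaL; rewrite (Hg _ _ lk) gkL eqxx.
Qed.

Definition Dm (h : 'I_n -> nat) : 'M[A]_n := diag_mx (\row_i (h i)%:R).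

Lemma comm_Dm h (Hh : forall a b, lab a = lab b -> h a = h b) : Dm h *m v = v *m Dm h.
Proof.
apply/matrixP => a b; rewrite /Dm mul_diag_mx mul_mx_diag !mxE.
have [lab_ab|nab] := eqVneq (lab a) (lab b).
- by rewrite (Hh _ _ lab_ab) mulr_natl mulr_natr.
- by rewrite Hv // mulr0 mul0r.
Qed.

Definition Wm (T' : eqType) (g : 'I_n -> T') (w : 'I_n -> A) : 'M[A]_n :=
  \matrix_(i, j) (if g i == g j then w i else 0).

Arguments Wm {T'}.
Lemma comm_Wm (T' : eqType) (g : 'I_n -> T') w (Hg : forall a b, lab a = lab b -> g a = g b)
  (Hw : forall a b, g a = g b -> w a = w b) : Wm g w *m v = v *m Wm g w.
Proof.
apply/matrixP => a b; rewrite !mxE.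
under eq_bigr do rewrite mxE.
rewrite [RHS](eq_bigr (fun k => v a k * (if g k == g b then w b else 0))); last first.
  move=> k _; rewrite mxE; case: eqP => [/Hw -> //|_]; by [].
transitivity (w a * \sum_(k | g a == g k) v k b).
  by rewrite [in RHS]big_mkcond mulr_sumr; apply: eq_bigr => k _; case: ifP; rewrite ?mulr0 ?mul0r.
transitivity ((\sum_(k | g k == g b) v a k) * w b); last first.
  by rewrite [in LHS]big_mkcond mulr_suml; apply: eq_bigr => k _; case: ifP; rewrite ?mul0r ?mulr0.
rewrite (eq_bigl (fun k => g k == g a)); last by move=> k; rewrite eq_sym.
rewrite sum_col_g // sum_row_g //.
have [gab|gab] := eqVneq (g a) (g b).
- by rewrite mulr1 mul1r (Hw _ _ gab).
- by rewrite mulr0 mul0r.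
Qed.

End Mx.
Arguments Dm {A n}.
Arguments Wm {A n T'}.

Lemma half_val (A : algType CC) (d c : nat) (b : bool) : (0 < c)%N ->
  (d = 0%N -> b = false) -> (d = c -> b = true) ->
  (d = 0%N \/ d.*2 = c \/ d = c) ->
  (((if d.*2 == c then ~~ b else b) : nat)%:R : A) =
    b%:R + d%:R * (2 / c%:R : CC)%:A - b%:R *+ 2.
Proof.
move=> c0 H0 Hc Hd.
have cne0 : (c%:R : CC) != 0 by rewrite pnatr_eq0 -lt0n.
have E : (d%:R : A) * (2 / c%:R : CC)%:A = (d%:R * (2 / c%:R) : CC)%:A.
  by rewrite mulr_natl scalerMnl -mulr_natl.
rewrite E.
case: Hd => [d0|[d2|dc]].
- rewrite (H0 d0) d0 /=.
  have -> : (0%N == c) = false by rewrite eq_sym; apply/negbTE; rewrite -lt0n.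
  by rewrite mul0r scale0r mul0rn subr0 addr0 mulr0n.
- rewrite d2 eqxx.
  have -> : (d%:R * (2 / c%:R) : CC) = 1.
    move: cne0; rewrite -d2 -muln2 natrM => cne0.
    have dne0 : (d%:R : CC) != 0 by move: cne0; rewrite mulf_eq0 negb_or => /andP[].
    by field.
  rewrite scale1r; case: b {H0 Hc} => /=.
  + by rewrite mulr2n subrr ?mulr0n.
  + by rewrite add0r mul0rn subr0.
- rewrite (Hc dc) dc /=.
  have -> : (c%:R * (2 / c%:R) : CC) = 2.
    by field.
  have ne : (c.*2 == c) = false.
    by apply/eqP; lia.
  by rewrite ne /= scaler_nat addrK.
Qed.

Section Switch.
Variables (A : algType CC) (n : nat) (P : {set {set 'I_n}}) (Q : {set {set {set 'I_n}}}).
Hypothesis HP : partition P [set: 'I_n].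
Hypothesis HQ : partition Q P.
Variable SD : {set {set 'I_n}}.
Hypothesis HSD : SD \in Q.
Variable e : rel 'I_n.
Hypothesis esym : symmetric e.
Let Cs := [set cover S | S in Q :\ SD].
Hypothesis GMii : GM_cond_ii e Cs (cover SD).

Let l2 := lab2 P Q.
Definition isD x := l2 x == SD.
Definition cnt x := #|cover (l2 x)|.
Definition wv x : A := if isD x then 0 else (2 / (cnt x)%:R : CC)%:A.

Lemma memD x : (x \in cover SD) = isD x.
Proof. exact: (mem_coverQ HP HQ). Qed.

Lemma mem_cell y : y \in cover (l2 y).
Proof. by rewrite (mem_coverQ HP HQ) ?(lab2_in HP HQ). Qed.

Lemma cnt_gt0 y : (0 < cnt y)%N.
Proof. by rewrite /cnt card_gt0; apply/set0Pn; exists y; exact: mem_cell. Qed.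

Lemma inCs C y : C \in Cs -> y \in C -> C = cover (l2 y) /\ l2 y != SD.
Proof.
case/imsetP=> S; rewrite inE => /andP[SnD SQ] ->.
rewrite (mem_coverQ HP HQ) // => /eqP yS; rewrite /l2 yS; split => //; by move: SnD; rewrite inE.
Qed.

Lemma Cs_lab y : ~~ isD y -> cover (l2 y) \in Cs.
Proof. by move=> ny; apply/imsetP; exists (l2 y) => //; rewrite !inE ny (lab2_in HP HQ). Qed.

Lemma sp_eq x y : switch_pair e Cs (cover SD) x y =
  [&& isD x, ~~ isD y & (nbrs_in e x (cover (l2 y))).*2 == cnt y].
Proof.
rewrite /switch_pair memD; case: (isD x) => //=.
apply/existsP/idP.
- case=> C /and3P[CCs yC h]; have [CE ny] := inCs CCs yC.
  by rewrite /isD ny /cnt -CE.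
- case/andP=> ny h; exists (cover (l2 y)); by rewrite Cs_lab // mem_cell.
Qed.

Lemma count_nb x L : L \in Q ->
  \sum_(j | l2 j == L) ((e x j : nat)%:R : A) = (nbrs_in e x (cover L))%:R.
Proof.
move=> LQ; rewrite -natr_sum; congr (_%:R).
rewrite (bigID (e x)) /= [X in (_ + X)%N]big1 ?addn0; last by move=> j /andP[_ /negbTE ->].
rewrite (eq_bigr (fun _ => 1%N)); last by move=> j /andP[_ ->].
rewrite sum1_card /nbrs_in; apply: eq_card => z.
by rewrite !inE (mem_coverQ HP HQ).
Qed.


Definition E : 'M[A]_n := adjmx A e.
Definition PD : 'M[A]_n := Dm (fun x => (isD x : nat)).
Definition PN : 'M[A]_n := Dm (fun x => (~~ isD x : nat)).
Definition W : 'M[A]_n := Wm l2 wv.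

Lemma wv_l2 a b : l2 a = l2 b -> wv a = wv b.
Proof. by rewrite /wv /isD /cnt => ->. Qed.

Lemma eDEW x y : (PD *m E *m W) x y =
  (isD x : nat)%:R * ((nbrs_in e x (cover (l2 y)))%:R * wv y).
Proof.
rewrite mxE.
under eq_bigr do rewrite /PD /Dm mul_diag_mx !mxE.
rewrite -(count_nb x ((lab2_in HP HQ) y)) mulr_suml mulr_sumr [in RHS]big_mkcond /=.
apply: eq_bigr => j _; case: eqP => [/wv_l2 ->|_]; first by rewrite mulrA.
by rewrite ?mulr0 ?mul0r.
Qed.

Lemma eWED x y : (W *m E *m PD) x y =
  (wv x * (nbrs_in e y (cover (l2 x)))%:R) * (isD y : nat)%:R.
Proof.
rewrite /PD /Dm mul_mx_diag !mxE; congr (_ * _).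
rewrite -(count_nb y ((lab2_in HP HQ) x)) mulr_sumr [in RHS]big_mkcond /=.
apply: eq_bigr => j _; rewrite !mxE (esym y j) [l2 j == _]eq_sym.
by case: eqP => _; rewrite ?mulr0 ?mul0r.
Qed.

Lemma eDEN x y : (PD *m E *m PN) x y = (isD x : nat)%:R * (e x y : nat)%:R * (~~ isD y : nat)%:R.
Proof. by rewrite /PD /PN /Dm mul_mx_diag mul_diag_mx !mxE. Qed.

Lemma eNED x y : (PN *m E *m PD) x y = (~~ isD x : nat)%:R * (e x y : nat)%:R * (isD y : nat)%:R.
Proof. by rewrite /PD /PN /Dm mul_mx_diag mul_diag_mx !mxE. Qed.


Lemma nb0 x (C : {set 'I_n}) y : y \in C -> nbrs_in e x C = 0%N -> e x y = false.
Proof.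
move=> yC h; apply/negbTE/negP => exy.
by have := card0_eq h y; rewrite !inE yC exy.
Qed.

Lemma nbc x (C : {set 'I_n}) y : y \in C -> nbrs_in e x C = #|C| -> e x y.
Proof.
move=> yC h.
have sub : [set z in C | e x z] \subset C by apply/subsetP => z; rewrite inE => /andP[].
by have := (subset_cardP h sub) y; rewrite !inE yC.
Qed.

Lemma switch_mx : adjmx A (GM_switch e Cs (cover SD)) =
  E + PD *m E *m W + W *m E *m PD - (PD *m E *m PN + PN *m E *m PD) *+ 2.
Proof.
apply/matrixP => x y.
have aE (M N : 'M[A]_n) i j : (M + N) i j = M i j + N i j by rewrite mxE.
have sE (M N : 'M[A]_n) i j : (M - N) i j = M i j - N i j by rewrite !mxE.
have nE (M : 'M[A]_n) i j : (M *+ 2) i j = M i j *+ 2 by rewrite mulmxnE.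
rewrite sE !aE !eDEW !eWED !eDEN !eNED /E mxE [in RHS]mxE /GM_switch !sp_eq /wv.
case Dx: (isD x); case Dy: (isD y) => /=; rewrite ?orbF ?mulr1n ?mulr0n ?mul1r ?mulr1 ?mul0r ?mulr0 ?addr0 ?add0r ?subr0.
- by [].
- rewrite -mulr2n. apply: (@half_val A (nbrs_in e x (cover (l2 y))) (cnt y) (e x y)).
  + exact: cnt_gt0.
  + by apply: nb0; exact: mem_cell.
  + by apply: nbc; exact: mem_cell.
  + by apply: GMii; [rewrite memD | apply: Cs_lab; rewrite Dy].
- have comm (c : A) (k : nat) : c * k%:R = k%:R * c by rewrite mulr_natr mulr_natl.
  rewrite (esym x y) [(_ %:A) * _]comm -mulr2n.
  apply: (@half_val A (nbrs_in e y (cover (l2 x))) (cnt x) (e y x)).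
  + exact: cnt_gt0.
  + by apply: nb0; exact: mem_cell.
  + by apply: nbc; exact: mem_cell.
  + by apply: GMii; [rewrite memD | apply: Cs_lab; rewrite Dx].
- by [].
Qed.

End Switch.

Lemma inter3 (A : pzRingType) (n : nat) (v X1 X2 Y1 Y2 Z1 Z2 : 'M[A]_n) :
  X1 *m v = v *m X2 -> Y1 *m v = v *m Y2 -> Z1 *m v = v *m Z2 ->
  (X1 *m Y1 *m Z1) *m v = v *m (X2 *m Y2 *m Z2).
Proof.
move=> hX hY hZ.
by rewrite -mulmxA hZ mulmxA -(mulmxA X1) hY mulmxA hX -!mulmxA.
Qed.

Unset Implicit Arguments.

Theorem theorem4p3 (n : nat) (e1 e2 : rel 'I_n)
    (He1 : simple_graph e1) (He2 : simple_graph e2)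
    (P : {set {set 'I_n}}) (HP : partition P [set: 'I_n])
    (Q : {set {set {set 'I_n}}}) (HQ : partition Q P)
    (SD : {set {set 'I_n}}) (HSD : SD \in Q)
    (Hu : exists (A : algType CC) (nrm : A -> RR) (st : A -> A),
        is_unital_cstar nrm st /\
        exists u : 'M[A]_n, [/\ quantum_perm_matrix st u,
          u *m adjmx A e1 = adjmx A e2 *m u & block_diagonal P u])
    (GMi1 : GM_cond_i e1 [set cover S | S in Q :\ SD])
    (GMii1 : GM_cond_ii e1 [set cover S | S in Q :\ SD] (cover SD))
    (GMi2 : GM_cond_i e2 [set cover S | S in Q :\ SD])
    (GMii2 : GM_cond_ii e2 [set cover S | S in Q :\ SD] (cover SD)) :
  quantum_isomorphic
    (GM_switch e1 [set cover S | S in Q :\ SD] (cover SD))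
    (GM_switch e2 [set cover S | S in Q :\ SD] (cover SD)).
Proof.
case: Hu => A [nrm [st [Hcs [u [[Hproj [Hr Hc]] Hcomm Hbd]]]]].
case: He1 => s1 _; case: He2 => s2 _.
pose v := u^T.
have Hv : forall a b, pblock P a != pblock P b -> v a b = 0.
  by move=> a b ab; rewrite mxE; apply: Hbd; rewrite eq_sym.
have Hvr : forall i, \sum_(k < n) v i k = 1.
  by move=> i; rewrite -(Hc i); apply: eq_bigr => k _; rewrite mxE.
have Hvc : forall i, \sum_(k < n) v k i = 1.
  by move=> i; rewrite -(Hr i); apply: eq_bigr => k _; rewrite mxE.
have Hint : adjmx A e1 *m v = v *m adjmx A e2.
  apply/matrixP => a b; have := Hcomm; move/matrixP/(_ b a); rewrite !mxE => h.
  transitivity (\sum_j u b j * adjmx A e1 j a).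
    by apply: eq_bigr => j _; rewrite !mxE (s1 a j) mulr_natl mulr_natr.
  rewrite h; apply: eq_bigr => j _; rewrite !mxE (s2 b j) mulr_natl mulr_natr.
  by [].
exists A, nrm, st; split => //; exists v; split.
  split; first by move=> i j; rewrite mxE; exact: Hproj.
  by split.
have lP : forall a b, pblock P a = pblock P b -> lab2 P Q a = lab2 P Q b.
  by move=> a b; rewrite /lab2 => ->.
have cPD : PD A P Q SD *m v = v *m PD A P Q SD.
  apply: (comm_Dm Hv) => a b /lP; by rewrite /isD => ->.
have cPN : PN A P Q SD *m v = v *m PN A P Q SD.
  apply: (comm_Dm Hv) => a b /lP; by rewrite /isD => ->.
have cW : W A P Q SD *m v = v *m W A P Q SD.
  apply: (comm_Wm Hv Hvr Hvc) => //; exact: wv_l2.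
rewrite (switch_mx A HP HQ HSD s1 GMii1) (switch_mx A HP HQ HSD s2 GMii2).
rewrite !mulr2n !(mulmxDl, mulmxBl, mulmxDr, mulmxBr, mulNmx, mulmxN).
have hE : E A e1 *m v = v *m E A e2 by [].
congr (_ + _ + _ + - (_ + _ + (_ + _))); first exact: hE; by apply: inter3.
Qed.
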